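(* Let $\Gamma$ be a simply connected closed surface approximated by a triangular mesh with $N$ edges, $N_S$ triangles and $N_L$ vertices, and let $\mathsf{\Sigma}$, $\mathsf{\Lambda}$, $\mathsf{G}$, $\mathsf{G}_p$, $\mathsf{G}_\lambda$, $\mathbb{G}$, $\mathbb{G}_{\tilde p}$, $\mathbb{G}_{\tilde\lambda}$ be as in the context. Define the normalized Loop and Star matrices $\tilde{\mathsf{\Sigma}}=\mathsf{G}^{-1/2}\mathsf{\Sigma}\mathsf{G}_p^{1/2}$, $\tilde{\mathsf{\Lambda}}=\mathsf{G}^{1/2}\mathsf{\Lambda}\mathsf{G}_\lambda^{-1/2}$ and the dually-normalized ones $\tilde{\mathbb{\Sigma}}=\mathbb{G}^{1/2}\mathsf{\Sigma}\mathbb{G}_{\tilde\lambda}^{-1/2}$, $\tilde{\mathbb{\Lambda}}=\mathbb{G}^{-1/2}\mathsf{\Lambda}\mathbb{G}_{\tilde p}^{1/2}$, and the projectors $\tilde{\mathsf{P}}^\Sigma=\tilde{\mathsf{\Sigma}}(\tilde{\mathsf{\Sigma}}^{\mathrm T}\tilde{\mathsf{\Sigma}})^+\tilde{\mathsf{\Sigma}}^{\mathrm T}$, $\tilde{\mathsf{P}}^\Lambda=\tilde{\mathsf{\Lambda}}(\tilde{\mathsf{\Lambda}}^{\mathrm T}\tilde{\mathsf{\Lambda}})^+\tilde{\mathsf{\Lambda}}^{\mathrm T}$, $\tilde{\mathbb{P}}^\Sigma=\tilde{\mathbb{\Sigma}}(\tilde{\mathbb{\Sigma}}^{\mathrm T}\tilde{\mathbb{\Sigma}})^+\tilde{\mathbb{\Sigma}}^{\mathrm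 T}$, $\tilde{\mathbb{P}}^\Lambda=\tilde{\mathbb{\Lambda}}(\tilde{\mathbb{\Lambda}}^{\mathrm T}\tilde{\mathbb{\Lambda}})^+\tilde{\mathbb{\Lambda}}^{\mathrm T}$. Then $$\tilde{\mathsf{P}}^\Lambda+\tilde{\mathsf{P}}^\Sigma=\mathsf{I}\qquad\text{and}\qquad \tilde{\mathbb{P}}^\Lambda+\tilde{\mathbb{P}}^\Sigma=\mathsf{I},$$ where $\mathsf{I}$ is the $N\times N$ identity.
   Context: Each edge $m$ of the mesh is shared by two triangles $c_m^+$, $c_m^-$. The Star-to-RWG matrix $\mathsf{\Sigma}\in\mathbb{R}^{N\times N_S}$ has $[\mathsf{\Sigma}]_{mn}=1$ if cell $n$ is $c_m^+$, $-1$ if cell $n$ is $c_m^-$, $0$ otherwise. The Loop-to-RWG matrix $\mathsf{\Lambda}\in\mathbb{R}^{N\times N_L}$ has $[\mathsf{\Lambda}]_{mn}=\pm1$ when vertex $n$ is an endpoint of edge $m$ (opposite signs for the two endpoints, fixed by the orientation convention of the RWG functions), $0$ otherwise; with this convention $\mathsf{\Sigma}^{\mathrm T}\mathsf{\Lambda}=\mathsf{0}$, and $\mathsf{\Sigma}\vec{s}+\mathsf{\Lambda}\vec{l}$ spans $\mathbb{R}^N$ on a simply connected closed surface (the discrete quasi-Helmholtz decomposition has no harmonic part). Gram matrices (all symmetric positive definite): $[\mathsf{G}]_{mn}=\langle\mathbf{f}_m,\mathbf{f}_n\rangle$ for the RWG basis functions $\mathbf{f}_n$ associated with the edges; $[\mathbb{G}]_{mn}=\langle\mathbf{g}_m,\mathbf{g}_n\rangle$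 for the dual (Buffa–Christiansen) edge functions $\mathbf{g}_n$; $[\mathsf{G}_p]_{mn}=\langle p_m,p_n\rangle$ with $p_m=1/A_m$ on triangle $c_m$ (area $A_m$) and $0$ elsewhere; $[\mathsf{G}_\lambda]_{mn}=\langle\lambda_m,\lambda_n\rangle$ for the piecewise-linear hat (pyramid) functions $\lambda_m$ at the vertices; $\mathbb{G}_{\tilde p}$ and $\mathbb{G}_{\tilde\lambda}$ are the Gram matrices of the dual patch functions (one per vertex) and dual pyramid functions (one per triangle) on the barycentric refinement. $\langle a,b\rangle=\int_\Gamma a\cdot b\,dS$. Matrix square roots are the symmetric positive definite ones; $^+$ is the Moore–Penrose pseudo-inverse. *)

(* Defs.v *)
From Stdlib Require Import ClassicalEpsilon.
From mathcomp Require Import all_boot all_algebra.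
From mathcomp Require Import reals.
Set Implicit Arguments. Unset Strict Implicit. Unset Printing Implicit Defensive.
Import GRing.Theory Num.Theory.
Local Open Scope ring_scope.

Section Defs.
Variable R : realType.

Definition spd (n : nat) (A : 'M[R]_n) : Prop :=
  A^T = A /\ forall v : 'cV[R]_n, v != 0 -> 0 < (v^T *m A *m v) 0 0.

(* The symmetric positive definite square root: the (unique) S, SPD, with S*S = A
   (chosen by Hilbert's epsilon; 0 if no such S exists). *)
Definition sqrtm (n : nat) (A : 'M[R]_n) : 'M[R]_n :=
  epsilon (inhabits 0) (fun S : 'M[R]_n => spd S /\ S *m S = A).

Definition penrose (m n : nat) (A : 'M[R]_(m, n)) (X : 'M[R]_(n, m)) : Prop :=
  [/\ A *m X *m A = A, X *m A *m X = X,
      (A *m X)^T = A *m X & (X *m A)^T = X *m A].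

Definition pinv (m n : nat) (A : 'M[R]_(m, n)) : 'M[R]_(n, m) :=
  epsilon (inhabits 0) (fun X => penrose A X).

Definition projm (m n : nat) (A : 'M[R]_(m, n)) : 'M[R]_m :=
  A *m pinv (A^T *m A) *m A^T.

(* Star-to-RWG matrix: edge m has cells cp m (= c_m^+) and cm m (= c_m^-). *)
Definition starRWG (N NS : nat) (cp cm : 'I_N -> 'I_NS) : 'M[R]_(N, NS) :=
  \matrix_(m, n) (if n == cp m then 1 else if n == cm m then -1 else 0).

(* Loop-to-RWG matrix: edge m has endpoints va m (sign +1) and vb m (sign -1);
   which endpoint is called va encodes the orientation convention. *)
Definition loopRWG (N NL : nat) (va vb : 'I_N -> 'I_NL) : 'M[R]_(N, NL) :=
  \matrix_(m, n) (if n == va m then 1 else if n == vb m then -1 else 0).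

End Defs.

(* Main.v *)
Require Import Defs.
From Stdlib Require Import ClassicalEpsilon.
From mathcomp Require Import all_boot all_algebra.
From mathcomp Require Import reals.
From mathcomp Require Import spectral sesquilinear complex.
From mathcomp Require Import all_order.
Import Order.TTheory.
Import GRing.Theory Num.Theory.
Local Open Scope ring_scope.
Set Implicit Arguments. Unset Strict Implicit.

Lemma interp_ex (F : fieldType) (f : F -> F) (s : seq F) :
  exists q : {poly F}, forall x, x \in s -> q.[x] = f x.
Proof.
elim: s => [|a s [q Hq]]; first by exists 0.
case: (boolP (a \in s)) => Has.
  exists q => x; rewrite inE => /orP[/eqP->|]; [exact: Hq|exact: Hq].
pose w := \prod_(b <- s) ('X - b%:P).
have wa : w.[a] != 0.
  rewrite horner_prod prodf_seq_neq0; apply/allP => b bs /=.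
  by rewrite hornerXsubC subr_eq0; apply: contraNneq Has => ->.
have wx : forall x, x \in s -> w.[x] = 0.
  move=> x xs; apply/eqP; rewrite horner_prod prodf_seq_eq0; apply/hasP.
  by exists x => //=; rewrite hornerXsubC subrr.
exists (q + ((f a - q.[a]) / w.[a]) *: w) => x; rewrite inE hornerD hornerZ.
case/orP => [/eqP->|xs]; first by rewrite divfK // addrC subrK.
by rewrite (wx x xs) mulr0 addr0 Hq.
Qed.

Section R.
Variable R : realType.
Local Notation fC := (real_complex R).

Lemma msq_ge0 (x : R) : 0 <= x * x.
Proof. by rewrite -expr2 sqr_ge0. Qed.

Lemma trmx_mul_eq0 m n (C : 'M[R]_(m,n)) : C^T *m C = 0 -> C = 0.
Proof.
move=> H; apply/matrixP => i j; have := congr1 (fun M : 'M[R]_n => M j j) H.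
rewrite !mxE => Hs.
have Hs' : \sum_(k < m) C k j * C k j = 0.
  by move: Hs; under eq_bigr do rewrite mxE.
have := @psumr_eq0P _ _ predT (fun k => C k j * C k j) (fun k _ => msq_ge0 _) Hs' i isT.
by move/eqP; rewrite mulf_eq0 orbb => /eqP.
Qed.

Lemma sumsq_gt0 n (w : 'cV[R]_n) : w != 0 -> 0 < (w^T *m w) 0 0.
Proof.
move=> wn0; rewrite lt0r; apply/andP; split.
  apply: contra wn0 => /eqP H; apply/eqP/trmx_mul_eq0.
  by apply/matrixP => i j; rewrite !ord1 H mxE.
rewrite mxE; apply: sumr_ge0 => k _; rewrite mxE; exact: msq_ge0.
Qed.

Lemma ginv_L1 m n (M : 'M[R]_(m,n)) (H : 'M[R]_n) :
  (M^T *m M) *m H *m (M^T *m M) = M^T *m M -> M *m H *m (M^T *m M) = M.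
Proof.
move=> hB; set B := M^T *m M in hB *.
set C := M *m H *m B - M.
have MC : M^T *m C = 0.
  by rewrite /C mulmxBr !mulmxA -/B -(mulmxA _ M^T M) -/B hB subrr.
have CC : C^T *m C = 0.
  have -> : C^T = (M *m H *m B)^T - M^T by rewrite /C linearB.
  by rewrite mulmxBl MC subr0 !trmx_mul -!mulmxA MC !mulmx0.
by apply/eqP; rewrite -subr_eq0; apply/eqP/trmx_mul_eq0.
Qed.

Lemma ginv_L1' m n (M : 'M[R]_(m,n)) (H : 'M[R]_n) :
  (M^T *m M) *m H *m (M^T *m M) = M^T *m M -> (M^T *m M) *m H *m M^T = M^T.
Proof.
move=> hB.
have hB' : (M^T *m M) *m H^T *m (M^T *m M) = M^T *m M.
  by have := congr1 (@trmx R _ _) hB; rewrite !trmx_mul !trmxK mulmxA.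
have := congr1 (@trmx R m n) (@ginv_L1 m n M H^T hB'); rewrite !trmx_mul !trmxK mulmxA.
by [].
Qed.

Lemma penrose_sym n (B : 'M[R]_n) : B^T = B -> exists X, penrose B X.
Proof.
move=> sB.
have [H gB] : exists H : 'M[R]_n, (B *m B) *m H *m (B *m B) = B *m B.
  by exists (pinvmx (B *m B)); rewrite mulmxKpV ?submx_refl.
have gB' : (B^T *m B) *m H *m (B^T *m B) = B^T *m B by rewrite sB.
have e1 := ginv_L1 gB'; rewrite sB in e1.
have e2 := ginv_L1' gB'; rewrite sB in e2.
have e1' : B *m H^T *m B *m B = B.
  by have := congr1 (@trmx R n n) e2; rewrite !trmx_mul sB !mulmxA.
have e1l : B *m H *m B *m B = B by rewrite -mulmxA.
have e2l : B *m B *m H *m B = B by [].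
have BHB : B *m H *m B = B *m H^T *m B.
  have -> : B *m H *m B = (B *m H^T *m B *m B) *m H *m B by rewrite e1'.
  have -> : B *m H^T *m B *m B *m H *m B = B *m H^T *m (B *m B *m H *m B).
    by rewrite !mulmxA.
  by rewrite e2l.
have sBHB : (B *m H *m B)^T = B *m H *m B.
  by rewrite !trmx_mul sB mulmxA BHB.
exists (B *m H *m B *m H *m B); split.
- by rewrite !mulmxA e2l e1l.
- have -> : B *m H *m B *m H *m B *m B *m (B *m H *m B *m H *m B) =
    B *m H *m (B *m H *m B *m B) *m B *m H *m B *m H *m B by rewrite !mulmxA.
  by rewrite e1l e1l.
- by rewrite !mulmxA e2l.
- have -> : B *m H *m B *m H *m B *m B = B *m H *m (B *m H *m B *m B).
    by rewrite !mulmxA.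
  by rewrite e1l sBHB.
Qed.

Lemma pinv_spec m n (A : 'M[R]_(m,n)) : penrose (A^T *m A) (pinv (A^T *m A)).
Proof.
rewrite /pinv; apply: epsilon_spec; apply: penrose_sym.
by rewrite trmx_mul trmxK.
Qed.

Lemma projm_left m n (A : 'M[R]_(m,n)) : A^T *m projm A = A^T.
Proof.
rewrite /projm !mulmxA; apply: ginv_L1'.
by case: (pinv_spec A).
Qed.

Lemma proj_sum N a b (M : 'M[R]_(N,a)) (L : 'M[R]_(N,b)) :
  M^T *m L = 0 ->
  (forall z : 'cV[R]_N, M^T *m z = 0 -> L^T *m z = 0 -> z = 0) ->
  projm L + projm M = 1%:M.
Proof.
move=> ML Hz.
have LM : L^T *m M = 0.
  by have := congr1 (@trmx R a b) ML; rewrite trmx_mul trmxK trmx0.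
set E := 1%:M - (projm L + projm M).
have ME : M^T *m E = 0.
  rewrite /E mulmxBr mulmx1 mulmxDr projm_left.
  by rewrite {1}/projm !mulmxA ML !mul0mx add0r subrr.
have LE : L^T *m E = 0.
  rewrite /E mulmxBr mulmx1 mulmxDr projm_left.
  by rewrite {1}/projm !mulmxA LM !mul0mx addr0 subrr.
have E0 : E = 0.
  apply/matrixP => i j.
  have : col j E = 0 by apply: Hz; rewrite colE mulmxA ?ME ?LE mul0mx.
  by move/matrixP/(_ i 0); rewrite !mxE.
by apply/eqP; rewrite eq_sym -subr_eq0 -/E E0.
Qed.

Lemma core N a b (X : 'M[R]_(N,a)) (Y : 'M[R]_(N,b)) (K : 'M[R]_N) :
  X^T *m Y = 0 -> (forall x : 'cV[R]_N, exists s l, x = X *m s + Y *m l) ->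
  spd K -> forall w : 'cV[R]_N, X^T *m w = 0 -> Y^T *m (K *m w) = 0 -> w = 0.
Proof.
move=> XY span [_ Kpd] w h1 h2; have [s [l ew]] := span w.
have Xs0 : X *m s = 0.
  have h : X^T *m X *m s = 0.
    by move: h1; rewrite ew mulmxDr !mulmxA XY mul0mx addr0.
  apply: trmx_mul_eq0; rewrite trmx_mul -mulmxA (mulmxA X^T) h.
  by rewrite mulmx0.
move: h2; rewrite ew Xs0 add0r => h2.
apply/eqP; apply/negPn/negP => /Kpd.
by rewrite trmx_mul -!mulmxA h2 !mulmx0 mxE ltxx.
Qed.

Lemma part N a b (X : 'M[R]_(N,a)) (Y : 'M[R]_(N,b)) (K S : 'M[R]_N)
  (T : 'M[R]_a) (U : 'M[R]_b) :
  X^T *m Y = 0 -> (forall x : 'cV[R]_N, exists s l, x = X *m s + Y *m l) ->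
  spd K -> S^T = S -> S \in unitmx -> S *m S = K -> T \in unitmx -> U \in unitmx ->
  projm (S *m Y *m invmx U) + projm (invmx S *m X *m T) = 1%:M.
Proof.
move=> XY span Kspd sS uS SSK uT uU.
have Mt : (invmx S *m X *m T)^T = T^T *m X^T *m invmx S.
  by rewrite !trmx_mul trmx_inv sS mulmxA.
have Lt : (S *m Y *m invmx U)^T = invmx U^T *m Y^T *m S.
  by rewrite !trmx_mul trmx_inv sS mulmxA.
apply: proj_sum.
  rewrite Mt !mulmxA -(mulmxA _ (invmx S) S) mulVmx // mulmx1.
  by rewrite -(mulmxA _ X^T Y) XY mulmx0 mul0mx.
move=> z; rewrite Mt Lt => h1 h2.
have h1' : X^T *m (invmx S *m z) = 0.
  have := congr1 (mulmx (invmx T^T)) h1.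
  by rewrite mulmx0 !mulmxA mulVmx ?unitmx_tr // mul1mx.
have h2' : Y^T *m (K *m (invmx S *m z)) = 0.
  have := congr1 (mulmx U^T) h2.
  rewrite mulmx0 !mulmxA mulmxV ?unitmx_tr // mul1mx -SSK.
  by rewrite mulmxA -(mulmxA _ S (invmx S)) mulmxV // mulmx1.
have := core XY span Kspd h1' h2' => h0.
by rewrite -(mulKVmx uS z) h0 mulmx0.
Qed.

Lemma spd_unit n (S : 'M[R]_n) : spd S -> S \in unitmx.
Proof.
move=> [_ Spd]; rewrite unitmxE unitfE; apply/negP => /det0P [v vn0 vS].
have : v^T != 0 by rewrite trmx_eq0.
move/Spd; rewrite trmxK vS mul0mx mxE.
by rewrite ltxx.
Qed.

Lemma sqrtm_ex n (A : 'M[R]_n) : spd A -> exists S, spd S /\ S *m S = A.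
Proof.
case: n A => [|n] A Aspd.
  exists 0; split; last by rewrite [A]flatmx0 [_ *m _]flatmx0.
  by split; [rewrite [_^T]flatmx0 | move=> v; rewrite [v]flatmx0 eqxx].
have [sA Apd] := Aspd.
have Ann : forall v : 'cV[R]_n.+1, 0 <= (v^T *m A *m v) 0 0.
  move=> v; case: (eqVneq v 0) => [->|/Apd/ltW //].
  by rewrite mulmx0 mxE.
pose AC := map_mx fC A.
have AC_herm : AC \is hermsymmx.
  apply: realsym_hermsym.
    apply/is_hermitianmxP; rewrite expr0 scale1r.
    apply/matrixP => i j; rewrite !mxE.
    by have := congr1 (fun M : 'M[R]_n.+1 => M j i) sA; rewrite mxE => ->.
  by apply/mxOverP => i j; rewrite mxE; apply/complex_realP; exists (A i j).
have := hermitian_normalmx AC_herm; move/orthomx_spectralP.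
set P := spectralmx AC; set d := spectral_diag AC => HA.
have uP : P \in unitmx := spectral_unit AC.
have dreal : forall i, d 0 i = fC (complex.Re (d 0 i)).
  move=> i; rewrite RRe_real //.
  exact: (mxOverP (hermitian_spectral_diag_real AC_herm)).
clearbody P d.
pose lam i := complex.Re (d 0 i).
have K : forall q, map_mx fC (horner_mx A q) =
    invmx P *m diag_mx (\row_i fC q.[lam i]) *m P.
  move=> q; rewrite map_horner_mx -/AC HA horner_mx_uconjC; last exact: uP.
  rewrite horner_mx_diag; congr (_ *m _ *m _); congr diag_mx.
  apply/rowP => i; rewrite !mxE dreal horner_map.
  by [].
have Keq : forall q r, (forall i, q.[lam i] = r.[lam i]) ->
    horner_mx A q = horner_mx A r.
  move=> q r h; apply: (@map_mx_inj _ _ fC); rewrite !K.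
  by congr (_ *m _ *m _); congr diag_mx; apply/rowP => i; rewrite !mxE h.
have hsym : forall q, (horner_mx A q)^T = horner_mx A q.
  elim/poly_ind => [|p c IH]; first by rewrite rmorph0 trmx0.
  have -> : horner_mx A (p * 'X + c%:P) = horner_mx A p *m A + c%:M.
    by rewrite rmorphD rmorphM /= horner_mx_X horner_mx_C.
  rewrite linearD /= trmx_mul tr_scalar_mx IH sA.
  by rewrite (comm_mx_horner p (erefl : comm_mx A A)).
pose s := map lam (enum 'I_n.+1).
have lams : forall i, lam i \in s by move=> i; rewrite map_f ?mem_enum.
have trmap : forall M : 'M[R]_n.+1, \tr (map_mx fC M) = fC (\tr M).
  by move=> M; rewrite /mxtrace rmorph_sum; apply: eq_bigr => i _; rewrite mxE.
have trK : forall q, \tr (horner_mx A q) = \sum_i q.[lam i].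
  move=> q; apply: (@complexI R); rewrite -trmap K rmorph_sum /=.
  rewrite mxtrace_mulC mulmxA mulmxV; last exact: uP.
  by rewrite mul1mx mxtrace_diag; apply: eq_bigr => i _; rewrite mxE.
have posl : forall i, 0 < lam i.
  have [q1 Hq1] := interp_ex (fun x : R => if x <= 0 then 1 else 0) s.
  pose B := horner_mx A q1.
  have hBAB : B^T *m A *m B = horner_mx A (q1 * 'X * q1).
    by rewrite hsym !rmorphM /= horner_mx_X.
  have trB : \tr (B^T *m A *m B) <= 0.
    rewrite hBAB trK; apply: sumr_le0 => i _.
    rewrite !hornerE Hq1 //; case: ifP => h; last by rewrite !mul0r.
    by rewrite mul1r mulr1.
  have B0 : B = 0.
    case: (pickP (fun j => col j B != 0)) => [j Hj | H]; last first.
      apply/matrixP => i j; have := H j; move=> /negbFE/eqP/matrixP/(_ i 0).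
      by rewrite !mxE.
    exfalso; move: trB; apply/negP; rewrite -ltNge.
    have ent : forall k, (B^T *m A *m B) k k = ((col k B)^T *m A *m col k B) 0 0.
      move=> k; rewrite !mxE; apply: eq_bigr => l _; rewrite !mxE.
      congr (_ * _); apply: eq_bigr => m _; rewrite !mxE.
      by [].
    rewrite /mxtrace (bigD1 j) //= ent.
    apply: ltr_pwDl; first exact: Apd.
    by apply: sumr_ge0 => k _; rewrite ent.
  move=> i.
  have D0 : diag_mx (\row_i fC q1.[lam i]) = 0.
    have := K q1; rewrite -/B B0 map_mx0 => h.
    have -> : diag_mx (\row_i fC q1.[lam i]) =
      P *m (invmx P *m diag_mx (\row_i fC q1.[lam i]) *m P) *m invmx P.
      rewrite !mulmxA mulmxV; last exact: uP.
      rewrite mul1mx -mulmxA mulmxV; last exact: uP.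
      by rewrite mulmx1.
    by rewrite -h mulmx0 mul0mx.
  have := congr1 (fun M : 'M[R[i]]_n.+1 => M i i) D0.
  rewrite !mxE eqxx mulr1n => /eqP; rewrite fmorph_eq0 Hq1 //.
  by case: ifP => h; [rewrite oner_eq0 | rewrite ltNge h].
have [q2 Hq2] := interp_ex (fun x : R => Num.sqrt (Num.sqrt x)) s.
pose T := horner_mx A q2.
have T4 : T *m T *m T *m T = A.
  have -> : T *m T *m T *m T = horner_mx A (q2 * q2 * q2 * q2).
    by rewrite !rmorphM.
  rewrite -{2}(horner_mx_X A); apply: Keq => i; rewrite !hornerE Hq2 //.
  have l0 := ltW (posl i).
  have e : Num.sqrt (Num.sqrt (lam i)) * Num.sqrt (Num.sqrt (lam i)) = Num.sqrt (lam i).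
    by rewrite -expr2 sqr_sqrtr // sqrtr_ge0.
  by rewrite e -mulrA e -expr2 sqr_sqrtr.
have Tsym : T^T = T := hsym q2.
exists (T *m T); split; last by rewrite mulmxA T4.
split; first by rewrite trmx_mul Tsym.
move=> v vn0.
have Tv : T *m v != 0.
  apply: contra vn0 => /eqP Tv0.
  have Av : A *m v = 0 by rewrite -T4 -!mulmxA Tv0 !mulmx0.
  have := Apd v; rewrite -mulmxA Av mulmx0 mxE.
  by case: (eqVneq v 0) => // _ /(_ isT); rewrite ltxx.
have := sumsq_gt0 Tv.
by rewrite trmx_mul Tsym !mulmxA.
Qed.

Lemma sqrtm_spec n (A : 'M[R]_n) : spd A ->
  [/\ (sqrtm A)^T = sqrtm A, sqrtm A \in unitmx & sqrtm A *m sqrtm A = A].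
Proof.
move=> Aspd; have [] : spd (sqrtm A) /\ sqrtm A *m sqrtm A = A.
  exact: (epsilon_spec (inhabits 0) (fun S : 'M[R]_n => spd S /\ S *m S = A) (sqrtm_ex Aspd)).
move=> Sspd SS; split => //; [by case: Sspd | exact: spd_unit].
Qed.
End R.

Theorem mainTheorem7 (R : realType) (N NS NL : nat)
  (cp cm : 'I_N -> 'I_NS) (va vb : 'I_N -> 'I_NL)
  (Hc : forall m, cp m != cm m) (Hv : forall m, va m != vb m)
  (HSL : (starRWG R cp cm)^T *m loopRWG R va vb = 0)
  (Hspan : forall x : 'cV[R]_N, exists (s : 'cV[R]_NS) (l : 'cV[R]_NL),
      x = starRWG R cp cm *m s + loopRWG R va vb *m l)
  (G : 'M[R]_N) (Gp : 'M[R]_NS) (Gl : 'M[R]_NL)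
  (GG : 'M[R]_N) (Gpt : 'M[R]_NL) (Glt : 'M[R]_NS)
  (HG : spd G) (HGp : spd Gp) (HGl : spd Gl)
  (HGG : spd GG) (HGpt : spd Gpt) (HGlt : spd Glt) :
  let Sig := starRWG R cp cm in
  let Lam := loopRWG R va vb in
  let Sigt := invmx (sqrtm G) *m Sig *m sqrtm Gp in
  let Lamt := sqrtm G *m Lam *m invmx (sqrtm Gl) in
  let SigtD := sqrtm GG *m Sig *m invmx (sqrtm Glt) in
  let LamtD := invmx (sqrtm GG) *m Lam *m sqrtm Gpt in
  projm Lamt + projm Sigt = 1%:M /\ projm LamtD + projm SigtD = 1%:M.
Proof.
move=> Sig Lam Sigt Lamt SigtD LamtD.
have [sG uG GGs] := sqrtm_spec HG.
have [_ uGp _] := sqrtm_spec HGp.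
have [_ uGl _] := sqrtm_spec HGl.
have [sGG uGG GGGs] := sqrtm_spec HGG.
have [_ uGpt _] := sqrtm_spec HGpt.
have [_ uGlt _] := sqrtm_spec HGlt.
split.
  exact: (part HSL Hspan HG sG uG GGs uGp uGl).
rewrite addrC.
have HLS : Lam^T *m Sig = 0.
  by have := congr1 (@trmx R _ _) HSL; rewrite trmx_mul trmxK trmx0.
have Hspan' : forall x : 'cV[R]_N, exists l s, x = Lam *m l + Sig *m s.
  by move=> x; have [s [l ->]] := Hspan x; exists l, s; rewrite addrC.
exact: (part HLS Hspan' HGG sGG uGG GGGs uGpt uGlt).
Qed.
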